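(* In the weighted transaction packaging game described in the context, let $\mathrm{sum}=\sum_{\mathsf{tx}'\in M}s(\mathsf{tx}')$ and $$\hat p^{\mathrm{real}}(\mathsf{tx})=\frac{1}{\mathrm{sum}}\left(k+\sum_{\mathsf{tx}''\in M}s(\mathsf{tx}'')\frac{\ln v(\mathsf{tx})-\ln v(\mathsf{tx}'')}{\lambda}\right)\quad(\mathsf{tx}\in M).$$ For $x\in\mathbb{R}$ define $p^{\mathrm{real}}_x:M\to\mathbb{R}$ by $p^{\mathrm{real}}_x(\mathsf{tx})=0$ if $\hat p^{\mathrm{real}}(\mathsf{tx})\le x$, $p^{\mathrm{real}}_x(\mathsf{tx})=\hat p^{\mathrm{real}}(\mathsf{tx})-x$ if $x<\hat p^{\mathrm{real}}(\mathsf{tx})<x+1$, and $p^{\mathrm{real}}_x(\mathsf{tx})=1$ if $\hat p^{\mathrm{real}}(\mathsf{tx})\ge x+1$. Let $\hat x$ be the smallest real solution of the equation $\sum_{\mathsf{tx}\in M}\min(\max(\hat p^{\mathrm{real}}(\mathsf{tx})-x,0),1)\,s(\mathsf{tx})=k$. Then (1) $p^{\mathrm{real}}_{\hat x}(\mathsf{tx})\in[0,1]$ for all $\mathsf{tx}\in M$, and (2) $\sum_{\mathsf{tx}\in M}p^{\mathrm{real}}_{\hat x}(\mathsf{tx})s(\mathsf{tx})=k$. Furthermore, if there is a mixed strategy $\sigma$ with $p^\sigma(\mathsf{tx})=p^{\mathrm{real}}_{\hat x}(\mathsf{tx})$ for all $\mathsf{tx}\in M$, then $\sigma$ is an equilibrium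 strategy.
   Context: Weighted transaction packaging game. Fix a real $k>0$ (block capacity), a real $\lambda>0$ (network latency parameter), a finite set $M$ (the mempool) of transactions, a gas price function $v:M\to(0,\infty)$, and a size function $s:M\to(0,\infty)$ (block capacity used by each transaction), with $\sum_{\mathsf{tx}\in M}s(\mathsf{tx})\ge k$. Miners are indexed by $i\in[0,1]$. A pure strategy of a miner is a subset $D\subseteq M$ with $\sum_{\mathsf{tx}\in D}s(\mathsf{tx})\le k$; a mixed strategy is a probability distribution $\sigma$ on such subsets, with marginal probability $p^\sigma(\mathsf{tx})=\sum_D\sigma(D)\mathbf{1}[\mathsf{tx}\in D]$. Conditional on miner $i$ mining a block $B_i$ (drawn from her mixed strategy $\sigma_i$), the number $\gamma$ of other blocks mined is distributed as $\mathrm{Poisson}(\lambda)$; they are mined by miners chosen independently and uniformly at random from $[0,1]$, each such miner $j$ producing a block $B_j$ drawn independently from her mixed strategy $\sigma_j$. A transaction $\mathsf{tx}$ in $B_i$ pays gas fee $s(\mathsf{tx})v(\mathsf{tx})$ to miner $i$ only if no other mined block contains it, so the utility of miner $i$ is $u_i(\sigma_i,\sigma_{-i})=\sum_{\mathsf{tx}\in M}p^{\sigma_i}(\mathsf{tx})\,s(\mathsf{tx})\,v(\mathsf{tx})\,\Pr[\text{no other mined block }B_j\ (j\neq i)\text{ contains }\mathsf{tx}]$. A mixed strategy $\sigma^*$ is an equilibrium strategy if for every $i\in[0,1]$ and every mixed strategy $\sigma$, $u_i(\sigma,\sigma^*_{-i})\le u_i(\sigma^*,\sigma^*_{-i})$,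 where $\sigma^*_{-i}$ denotes the profile in which all miners other than $i$ use $\sigma^*$. *)

(* Defs.v *)
From mathcomp Require Import all_boot all_order all_algebra.
From mathcomp Require Import all_classical all_reals all_analysis.
Set Implicit Arguments. Unset Strict Implicit. Unset Printing Implicit Defensive.
Import Order.TTheory GRing.Theory Num.Theory.
Import numFieldNormedType.Exports.
Local Open Scope ring_scope.

Section Game.
Variables (R : realType) (M : finType).

Definition feasible (k : R) (s : M -> R) (D : {set M}) : bool :=
  \sum_(tx in D) s tx <= k.

Definition mixed (k : R) (s : M -> R) (sigma : {ffun {set M} -> R}) : Prop :=
  [/\ forall D, 0 <= sigma D,
      forall D, ~~ feasible k s D -> sigma D = 0
    & \sum_D sigma D = 1].

Definition marginal (sigma : {ffun {set M} -> R}) (tx : M) : R :=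
  \sum_D sigma D * (tx \in D)%:R.

(* probability that none of n blocks, drawn independently from tau,
   contains tx *)
Definition none_of_n (tau : {ffun {set M} -> R}) (tx : M) (n : nat) : R :=
  \sum_(B : {ffun 'I_n -> {set M}})
     (\prod_(j < n) tau (B j)) * ([forall j, tx \notin B j])%:R.

Definition poisson (lambda : R) (n : nat) : R :=
  expR (- lambda) * lambda ^+ n / n`!%:R.

(* Pr[no other mined block contains tx], when the number of other blocks is
   Poisson(lambda) and each other block is drawn independently from tau *)
Definition no_other (lambda : R) (tau : {ffun {set M} -> R}) (tx : M) : R :=
  limn (series (fun n => poisson lambda n * none_of_n tau tx n)).

(* utility of a miner playing sigma while all other miners play tau *)
Definition utility (lambda : R) (s v : M -> R)
    (sigma tau : {ffun {set M} -> R}) : R :=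
  \sum_tx marginal sigma tx * s tx * v tx * no_other lambda tau tx.

(* equilibrium strategy (the utility does not depend on the miner's index
   i ∈ [0,1] since all other miners play sigmastar) *)
Definition equilibrium (k lambda : R) (s v : M -> R)
    (sigmastar : {ffun {set M} -> R}) : Prop :=
  mixed k s sigmastar /\
  forall i : R, 0 <= i <= 1 ->
  forall sigma, mixed k s sigma ->
    utility lambda s v sigma sigmastar <= utility lambda s v sigmastar sigmastar.

Definition phat (k lambda : R) (s v : M -> R) (tx : M) : R :=
  (k + \sum_(tx'' : M) s tx'' * ((ln (v tx) - ln (v tx'')) / lambda))
  / \sum_(tx' : M) s tx'.

Definition preal (k lambda : R) (s v : M -> R) (x : R) (tx : M) : R :=
  let ph := phat k lambda s v tx in
  if ph <= x then 0 else if ph < x + 1 then ph - x else 1.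

Definition clamp_sum (k lambda : R) (s v : M -> R) (x : R) : R :=
  \sum_(tx : M)
    Num.min (Num.max (phat k lambda s v tx - x) 0) 1 * s tx.

End Game.

(* Main.v *)
Require Import Defs.
From mathcomp Require Import all_boot all_order all_algebra.
From mathcomp Require Import all_classical all_reals all_analysis.
From mathcomp Require Import ring lra.
Import Order.TTheory GRing.Theory Num.Theory.
Local Open Scope ring_scope.

Lemma none_of_nE (R : realType) (M : finType) (tau : {ffun {set M} -> R}) tx n :
  \sum_D tau D = 1 -> none_of_n tau tx n = (1 - marginal tau tx) ^+ n.
Proof.
move=> Hs; rewrite /none_of_n.
transitivity (\sum_(B : {ffun 'I_n -> {set M}})
   \prod_(j < n) (tau (B j) * (tx \notin B j)%:R)).
  apply: eq_bigr => B _; rewrite big_split /=; congr (_ * _).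
  case: (boolP [forall j, tx \notin B j]) => [/forallP H|/forallPn [j Hj]].
    by rewrite big1 // => j _; rewrite H.
  by rewrite (bigD1 j) //= (negbTE Hj) mul0r.
rewrite -(bigA_distr_bigA (fun (j : 'I_n) D => tau D * (tx \notin D)%:R)).
rewrite prodr_const card_ord; congr (_ ^+ _).
rewrite /marginal -[X in X - _]Hs -sumrB; apply: eq_bigr => D _.
by case: (tx \in D) => /=; rewrite ?mulr1 ?mulr0 ?subr0 ?subrr.
Qed.

Lemma no_otherE (R : realType) (M : finType) (lambda : R) (tau : {ffun {set M} -> R}) tx :
  \sum_D tau D = 1 -> no_other lambda tau tx = expR (- (lambda * marginal tau tx)).
Proof.
move=> Hs; rewrite /no_other.
have -> : (fun n => poisson lambda n * none_of_n tau tx n) =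
   expR (- lambda) *: exp_coeff (lambda * (1 - marginal tau tx)).
  apply/funext => n; rewrite /poisson none_of_nE // /exp_coeff /=.
  rewrite (_ : (expR (- lambda) *: _) n = expR (- lambda) * ((lambda * (1 - marginal tau tx)) ^+ n / n`!%:R)) //.
  rewrite exprMn; ring.
rewrite seriesZ limZl_tmp; last exact: is_cvg_series_exp_coeff.
rewrite -/(expR _) /GRing.scale /= -expRD; congr expR; ring.
Qed.

Lemma preal_clamp (R : realType) (M : finType) k lambda (s v : M -> R) x tx :
  preal k lambda s v x tx = Num.min (Num.max (phat k lambda s v tx - x) 0) 1.
Proof.
rewrite /preal; set p := phat _ _ _ _ _.
case: ifP => H1.
  have -> : Num.max (p - x) 0 = 0 by apply/max_idPr; rewrite subr_le0.
  by apply/esym/min_idPl.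
have H1' : 0 < p - x by rewrite subr_gt0 ltNge H1.
rewrite (max_idPl (ltW H1')).
case: ifP => H2.
  by apply/esym/min_idPl; rewrite lerBlDl ltW.
by apply/esym/min_idPr; rewrite lerBrDl leNgt H2.
Qed.

Lemma marginal_bounds (R : realType) (M : finType) k (s : M -> R) sigma tx :
  mixed k s sigma -> 0 <= marginal sigma tx <= 1.
Proof.
case=> H0 _ H1; apply/andP; split.
  by apply: sumr_ge0 => D _; apply: mulr_ge0 => //; case: (tx \in D).
rewrite -H1; apply: ler_sum => D _.
by case: (tx \in D); rewrite /= ?mulr1 ?mulr0.
Qed.

Lemma marginal_sum (R : realType) (M : finType) k (s : M -> R) sigma :
  mixed k s sigma -> \sum_tx marginal sigma tx * s tx <= k.
Proof.
case=> H0 Hf H1.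
rewrite /marginal.
under eq_bigr => tx _ do rewrite mulr_suml.
rewrite exchange_big /=.
have Hk : k = \sum_D sigma D * k by rewrite -mulr_suml H1 mul1r.
rewrite [X in _ <= X]Hk; apply: ler_sum => D _.
under eq_bigr => tx _ do rewrite -mulrA.
rewrite -mulr_sumr.
case: (boolP (feasible k s D)) => HD; last by rewrite Hf // !mul0r.
apply: ler_wpM2l => //.
move: HD; rewrite /feasible big_mkcond /=.
congr (_ <= _); apply: eq_bigr => tx _.
by case: (tx \in D); rewrite /= ?mul1r ?mul0r.
Qed.

Lemma phat_const (R : realType) (M : finType) k lambda (s v : M -> R) tx :
  lambda != 0 -> \sum_tx s tx != 0 ->
  ln (v tx) - lambda * phat k lambda s v tx =
  (\sum_t s t * ln (v t) - lambda * k) / \sum_t s t.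
Proof.
move=> Hl HS; rewrite /phat.
set S := \sum_t s t; set T := \sum_t s t * ln (v t).
have -> : \sum_t s t * ((ln (v tx) - ln (v t)) / lambda) =
          (ln (v tx) * S - T) / lambda.
  rewrite /S /T mulr_sumr -sumrB mulr_suml; apply: eq_bigr => t _.
  field; exact: Hl.
by field; apply/andP; split.
Qed.

Lemma key (R : realType) (M : finType) k lambda (s v : M -> R) x tx c q :
  0 < lambda -> 0 < v tx -> ln (v tx) - lambda * phat k lambda s v tx = c ->
  0 <= q <= 1 ->
  (q - preal k lambda s v x tx) * (v tx * expR (- (lambda * preal k lambda s v x tx)))
  <= (q - preal k lambda s v x tx) * expR (c + lambda * x).
Proof.
move=> Hl Hv Hc /andP[q0 q1].
have Hv' : v tx = expR (c + lambda * phat k lambda s v tx).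
  by rewrite -Hc subrK lnK // posrE.
rewrite Hv' -expRD /preal; set p := phat _ _ _ _ _.
case: ifP => H1.
  rewrite subr0 mulr0 oppr0 addr0; apply: ler_wpM2l => //.
  by rewrite ler_expR lerD2l ler_wpM2l // ltW.
case: ifP => H2.
  by rewrite (_ : c + lambda * p + - (lambda * (p - x)) = c + lambda * x) //; ring.
apply: ler_wnM2l; first by rewrite subr_le0.
rewrite ler_expR mulr1 -addrA lerD2l -mulrN1 -mulrDr ler_wpM2l ?(ltW Hl) //.
by rewrite lerBrDr leNgt H2.
Qed.

Theorem theorem4p1 (R : realType) (M : finType) (k lambda : R)
    (v s : M -> R) (xhat : R) :
  0 < k -> 0 < lambda ->
  (forall tx, 0 < v tx) -> (forall tx, 0 < s tx) ->
  k <= \sum_(tx : M) s tx ->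
  clamp_sum k lambda s v xhat = k ->
  (forall x : R, clamp_sum k lambda s v x = k -> xhat <= x) ->
  [/\ (forall tx, 0 <= preal k lambda s v xhat tx <= 1),
      \sum_(tx : M) preal k lambda s v xhat tx * s tx = k
    & forall sigma : {ffun {set M} -> R},
        mixed k s sigma ->
        (forall tx, marginal sigma tx = preal k lambda s v xhat tx) ->
        equilibrium k lambda s v sigma].
Proof.
move=> k0 l0 v0 s0 kS Hcl _.
have S0 : \sum_(tx : M) s tx != 0 by rewrite gt_eqF // (lt_le_trans k0 kS).
have Hsum : \sum_(tx : M) preal k lambda s v xhat tx * s tx = k.
  rewrite -[RHS]Hcl /clamp_sum; apply: eq_bigr => tx _; by rewrite preal_clamp.
split => //.
  move=> tx; rewrite preal_clamp; apply/andP; split.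
    by rewrite le_min ler01 le_max lexx orbT.
  by rewrite ge_min lexx orbT.
move=> sigma Hm Hmarg; split => // _ _ sigma' Hm'.
have Hs1 : \sum_D sigma D = 1 by case: Hm.
rewrite /utility.
set P := preal k lambda s v xhat.
set c := (\sum_t s t * ln (v t) - lambda * k) / \sum_t s t.
set W := expR (c + lambda * xhat).
set w := fun tx => v tx * expR (- (lambda * P tx)).
have E1 : forall sg, \sum_tx marginal sg tx * s tx * v tx * no_other lambda sigma tx
   = \sum_tx marginal sg tx * s tx * w tx.
  move=> sg; apply: eq_bigr => tx _; rewrite no_otherE // Hmarg /w; ring.
rewrite !E1.
have H : \sum_tx (marginal sigma' tx - P tx) * s tx * w tx <=
         \sum_tx (marginal sigma' tx - P tx) * s tx * W.
  apply: ler_sum => tx _; rewrite mulrAC [X in _ <= X]mulrAC.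
  apply: ler_wpM2r; first exact: ltW.
  apply: key => //; first by rewrite phat_const // gt_eqF.
  exact: marginal_bounds Hm'.
have H2 : \sum_tx (marginal sigma' tx - P tx) * s tx * W =
          W * (\sum_tx marginal sigma' tx * s tx - k).
  rewrite -[X in _ - X]Hsum -sumrB mulr_sumr; apply: eq_bigr => tx _; rewrite /P; ring.
have H3 : \sum_tx (marginal sigma' tx - P tx) * s tx * w tx =
   \sum_tx marginal sigma' tx * s tx * w tx - \sum_tx marginal sigma tx * s tx * w tx.
  rewrite -sumrB; apply: eq_bigr => tx _; rewrite Hmarg /P; ring.
have H4 : W * (\sum_tx marginal sigma' tx * s tx - k) <= 0.
  rewrite pmulr_rle0 ?expR_gt0 // subr_le0; exact: marginal_sum Hm'.
rewrite -subr_le0 -H3; apply: le_trans H _; by rewrite H2.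
Qed.
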